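(* Let $G$ be a $3$-colorable well-bicovered graph in which every vertex lies in a triangle. Then in every proper $3$-coloring of $G$, each color class $V_i$ has size $b(G)/2$. Further, if every edge of $G$ lies in a triangle, then for each color class $V_i$ of a proper $3$-coloring, the subgraph $G-V_i$ is well-covered.
   Context: All graphs are finite and simple; ''subgraph'' means induced subgraph. $b(G)$ denotes the maximum order of an induced bipartite subgraph of $G$. A graph is well-bicovered if every vertex-inclusion-maximal induced bipartite subgraph has the same order. A graph is well-covered if every maximal independent set has the same cardinality. *)

(* Defs.v *)
(* A finite simple graph is a symmetric irreflexive relation
   e : rel T on a finite type T; subgraphs are induced subgraphs. *)
From mathcomp Require Import all_boot.
Set Implicit Arguments. Unset Strict Implicit. Unset Printing Implicit Defensive.

Section Graphs.
Variables (T : finType) (e : rel T).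

Definition simple_graph := symmetric e /\ irreflexive e.

Definition independent (A : {set T}) : bool :=
  [forall x in A, forall y in A, ~~ e x y].

Definition ind_bipartite (S : {set T}) : bool :=
  [exists A : {set T}, (A \subset S) && independent A && independent (S :\: A)].

Definition bnum : nat := \max_(S : {set T} | ind_bipartite S) #|S|.

Definition maximal_bipartite (S : {set T}) : Prop :=
  ind_bipartite S /\ forall S', ind_bipartite S' -> S \subset S' -> S' = S.

Definition well_bicovered : Prop :=
  forall S1 S2, maximal_bipartite S1 -> maximal_bipartite S2 -> #|S1| = #|S2|.

Definition maximal_independent (A : {set T}) : Prop :=
  independent A /\ forall A', independent A' -> A \subset A' -> A' = A.

Definition well_covered : Prop :=
  forall A1 A2, maximal_independent A1 -> maximal_independent A2 -> #|A1| = #|A2|.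

Definition proper3 (c : T -> 'I_3) : Prop := forall x y, e x y -> c x != c y.

Definition three_colorable : Prop := exists c, proper3 c.

Definition color_class (c : T -> 'I_3) (i : 'I_3) : {set T} := [set x | c x == i].

Definition every_vertex_in_triangle : Prop :=
  forall v, exists u w, [&& e v u, e v w & e u w].

Definition every_edge_in_triangle : Prop :=
  forall u v, e u v -> exists w, e u w && e v w.

End Graphs.

(* the induced subgraph G - U on the vertex type {x | x \notin U} *)
Definition del_type (T : finType) (U : {set T}) := {x : T | x \notin U}.
Definition del_rel (T : finType) (e : rel T) (U : {set T}) : rel (del_type U) :=
  fun x y => e (val x) (val y).
Arguments del_rel {T} e U.

(* Main.v *)
Require Import Defs.
From mathcomp Require Import all_boot.
From mathcomp Require Import zify.
Set Implicit Arguments. Unset Strict Implicit. Unset Printing Implicit Defensive.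

Lemma col3 (a b k : 'I_3) : a != k -> b != k -> a != b -> forall w : 'I_3, w != a -> w != b -> w = k.
Proof.
move: a b k => [a Ha] [b Hb] [k Hk] h1 h2 h3 [w Hw] h4 h5; apply: val_inj => /=.
move: h1 h2 h3 h4 h5; rewrite -!val_eqE /= => /eqP h1 /eqP h2 /eqP h3 /eqP h4 /eqP h5.
lia.
Qed.

Section S.
Variables (T : finType) (e : rel T).
Hypothesis sg : simple_graph e.

Lemma indepP (A : {set T}) x y : independent e A -> x \in A -> y \in A -> ~~ e x y.
Proof. by move=> /forallP H xA yA; move: (H x); rewrite xA => /forallP /(_ y); rewrite yA. Qed.

Lemma tri_nb (S : {set T}) x y z : x \in S -> y \in S -> z \in S ->
  e x y -> e x z -> e y z -> ~~ ind_bipartite e S.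
Proof.
move=> xS yS zS exy exz eyz; apply/negP => /existsP [A /andP [/andP [_ iA] iB]].
have hB u : u \in S -> u \notin A -> u \in S :\: A by move=> uS uA; rewrite inE uA uS.
case xA: (x \in A); case yA: (y \in A); case zA: (z \in A);
  rewrite ?(negbT xA) ?(negbT yA) ?(negbT zA) in hB.
- by move: (indepP iA xA yA); rewrite exy.
- by move: (indepP iA xA yA); rewrite exy.
- by move: (indepP iA xA zA); rewrite exz.
- by move: (indepP iB (hB _ yS (negbT yA)) (hB _ zS (negbT zA))); rewrite eyz.
- by move: (indepP iA yA zA); rewrite eyz.
- by move: (indepP iB (hB _ xS (negbT xA)) (hB _ zS (negbT zA))); rewrite exz.
- by move: (indepP iB (hB _ xS (negbT xA)) (hB _ yS (negbT yA))); rewrite exy.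
- by move: (indepP iB (hB _ xS (negbT xA)) (hB _ yS (negbT yA))); rewrite exy.
Qed.

Lemma wb_card (S : {set T}) : well_bicovered e -> maximal_bipartite e S -> #|S| = bnum e.
Proof.
move=> wb mS.
have h0 : 0 < #|[pred S | ind_bipartite e S]|.
  apply/card_gt0P; exists set0; rewrite inE; apply/existsP; exists set0.
  by rewrite sub0set /independent; apply/andP; split; apply/forallP=> x; rewrite ?setD0 inE.
have [S0 S0b S0m] := @eq_bigmax_cond {set T} _ (fun S : {set T} => #|S|) h0.
have [M /maxsetP [Mb Mm] sub] := maxset_exists (P := ind_bipartite e) (C := S0) S0b.
have mM : maximal_bipartite e M by [].
rewrite (wb _ _ mS mM); apply/eqP; rewrite eqn_leq.
rewrite /bnum (@leq_bigmax_cond {set T} _ (fun S : {set T} => #|S|) _ Mb) /=.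
rewrite /bnum. 
have -> : \max_(S | ind_bipartite e S) #|S| = \max_(S in [pred S | ind_bipartite e S]) #|S|.
  by apply: eq_bigl => X; rewrite inE.
by rewrite S0m subset_leq_card.
Qed.

End S.

Lemma third (a b : 'I_3) : a != b -> {w : 'I_3 | w != a & w != b}.
Proof.
move: a b => [a Ha] [b Hb]; rewrite -val_eqE /= => /eqP ab.
have h : 3 - a - b < 3 by lia.
by exists (Ordinal h); rewrite -val_eqE /=; apply/eqP; lia.
Qed.

Lemma other (a : 'I_3) : {w : 'I_3 | w != a}.
Proof.
move: a => [a Ha].
have h : (a.+1) %% 3 < 3 by lia.
by exists (Ordinal h); rewrite -val_eqE /=; apply/eqP; lia.
Qed.

Section Main.
Variables (T : finType) (e : rel T).
Hypothesis sg : simple_graph e.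
Hypothesis wb : well_bicovered e.
Variable c : T -> 'I_3.
Hypothesis pc : proper3 e c.

Lemma cls_indep i : independent e (color_class c i).
Proof.
apply/forallP => x; apply/implyP; rewrite inE => /eqP cx; apply/forallP => y.
apply/implyP; rewrite inE => /eqP cy; apply/negP => /pc; by rewrite cx cy eqxx.
Qed.

Lemma Sk_card (k : 'I_3) : every_vertex_in_triangle e ->
  #|[set x | c x != k]| = bnum e.
Proof.
move=> evt; apply: wb_card => //; split.
  have [i ik] := other k.
  apply/existsP; exists (color_class c i); rewrite -andbA; apply/and3P; split.
  - by apply/subsetP => x; rewrite !inE => /eqP ->.
  - exact: cls_indep.
  - apply/forallP => x; apply/implyP; rewrite !inE => /andP [xi xk].
    apply/forallP => y; apply/implyP; rewrite !inE => /andP [yi yk].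
    apply/negP => /[dup] exy /pc cxy.
    by move: (col3 xk yk cxy (w:=i)) ik; rewrite eq_sym xi eq_sym yi => /(_ isT isT) ->; rewrite eqxx.
move=> S' S'b sub; apply/eqP; rewrite eqEsubset sub andbT; apply/subsetP => v vS'.
rewrite inE; apply/negP => /eqP cv.
have [u [w /and3P [evu evw euw]]] := evt v.
have uS : u \in S' by apply: (subsetP sub); rewrite inE -cv eq_sym; apply: pc.
have wS : w \in S' by apply: (subsetP sub); rewrite inE -cv eq_sym; apply: pc.
by move: (tri_nb vS' uS wS evu evw euw); rewrite S'b.
Qed.

Lemma Sk_split (i j k : 'I_3) : i != k -> j != k -> i != j ->
  #|[set x | c x != k]| = #|color_class c i| + #|color_class c j|.
Proof.
move=> ik jk ij.
have -> : [set x | c x != k] = color_class c i :|: color_class c j.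
  apply/setP => x; rewrite !inE; apply/idP/idP.
  - move=> xk; apply/negPn/negP; rewrite negb_or => /andP [xi xj].
    by move: (col3 ik jk ij xi xj) xk => ->; rewrite eqxx.
  - by case/orP => /eqP ->.
rewrite cardsU.
have -> : color_class c i :&: color_class c j = set0.
  apply/setP => x; rewrite !inE; apply/negP => /andP [/eqP -> /eqP ci].
  by rewrite ci eqxx in ij.
by rewrite cards0 subn0.
Qed.

End Main.

Theorem mainTheorem15 (T : finType) (e : rel T) :
  simple_graph e -> three_colorable e -> well_bicovered e ->
  every_vertex_in_triangle e ->
  (forall (c : T -> 'I_3), proper3 e c ->
     forall i : 'I_3, 2 * #|color_class c i| = bnum e) /\
  (every_edge_in_triangle e ->
     forall (c : T -> 'I_3), proper3 e c ->
     forall i : 'I_3, well_covered (del_rel e (color_class c i))).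
Proof.
move=> sg _ wb evt; split.
  move=> c pc i.
  have [j ji] := other i.
  have [k ki kj] := third ji.
  have e1 := Sk_card wb pc i evt.
  have e2 := Sk_card wb pc j evt.
  have e3 := Sk_card wb pc k evt.
  rewrite (@Sk_split T c j k i) // 1?eq_sym // in e1.
  rewrite (@Sk_split T c i k j) // 1?eq_sym // in e2.
  rewrite (@Sk_split T c i j k) // 1?eq_sym // in e3.
  lia.
move=> eet c pc i.
set U := color_class c i.
have key : forall A, maximal_independent (del_rel e U) A -> #|A| + #|U| = bnum e.
  move=> A [Aind Amax].
  set B := (val @: A) :|: U.
  have valU : forall x, x \in val @: A -> x \notin U.
    by move=> x /imsetP [[x0 h] _ ->].
  have cB : #|B| = #|A| + #|U|.
    rewrite cardsU card_imset; last exact: val_inj.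
    have -> : val @: A :&: U = set0.
      apply/setP => x; rewrite [in RHS]inE; apply/negP => /setIP [/valU xU xU'].
      by rewrite xU' in xU.
    by rewrite cards0 subn0.
  rewrite -cB; apply: wb_card => //; split.
    apply/existsP; exists U; rewrite -andbA; apply/and3P; split.
    - exact: subsetUr.
    - exact: cls_indep.
    - apply/forallP => x; apply/implyP; rewrite !inE => /andP [xU].
      rewrite (negbTE xU) orbF => /imsetP [x' x'A ->].
      apply/forallP => y; apply/implyP; rewrite !inE => /andP [yU].
      rewrite (negbTE yU) orbF => /imsetP [y' y'A ->].
      exact: (indepP Aind x'A y'A).
  move=> S' S'b sub; apply/eqP; rewrite eqEsubset sub andbT; apply/subsetP => v vS'.
  apply/negPn/negP => vB.
  have vU : v \notin U by apply: contra vB => vU; rewrite inE vU orbT.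
  pose v' : del_type U := exist _ v vU.
  have v'A : v' \notin A by apply: contra vB => vA; rewrite inE; apply/orP; left; apply/imsetP; exists v'.
  have [a aA eva] : exists2 a, a \in A & e v (val a).
    case: (boolP (independent (del_rel e U) (v' |: A))) => [ind|nind].
      by move: (Amax _ ind (subsetUr _ _)) v'A => <-; rewrite setU11.
    move: nind => /forallPn [x]; rewrite negb_imply => /andP [xA' /forallPn [y]].
    rewrite negb_imply negbK => /andP [yA' exy].
    move: xA' yA'; rewrite !in_setU1 => /orP [/eqP xv | xA] /orP [/eqP yv | yA].
    - by move: exy; rewrite xv yv /del_rel /= (proj2 sg).
    - by exists y => //; move: exy; rewrite xv.
    - by exists x => //; move: exy; rewrite yv /del_rel /= (proj1 sg).
    - by move: (indepP Aind xA yA); rewrite exy.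
  have [w /andP [evw eaw]] := eet _ _ eva.
  have aU : val a \notin U := valP a.
  have vU2 : c v != i by have := vU; rewrite inE.
  have aU2 : c (val a) != i by have := aU; rewrite inE.
  have cw : c w = i.
    apply: (col3 vU2 aU2 (pc _ _ eva)).
    - by rewrite eq_sym; apply: pc.
    - by rewrite eq_sym; apply: pc.
  have wS : w \in S' by apply: (subsetP sub); rewrite !inE cw eqxx orbT.
  have aS : val a \in S' by apply: (subsetP sub); rewrite !inE; apply/orP; left; apply/imsetP; exists a.
  by move: (tri_nb vS' aS wS eva evw eaw); rewrite S'b.
move=> A1 A2 m1 m2.
by have := key _ m1; have := key _ m2; lia.
Qed.
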